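(* Let $(\Omega,\Sigma,\mathbb{P}_0)$ be a probability space, $\mathbb{L}^2=\mathbb{L}^2(\Omega,\Sigma,\mathbb{P}_0)$, and $n\ge 2$ an integer. Then $\mathrm{MAXVAR}_n$ is an averse risk measure, i.e. it satisfies: (A1) $\mathrm{MAXVAR}_n(C)=C$ for every constant $C$; (A2) $\mathrm{MAXVAR}_n(\lambda X+(1-\lambda)Y)\le \lambda\,\mathrm{MAXVAR}_n(X)+(1-\lambda)\,\mathrm{MAXVAR}_n(Y)$ for all $X,Y\in\mathbb{L}^2$, $\lambda\in[0,1]$; (A4) if $\|X^k-X\|_2\to0$ and $\mathrm{MAXVAR}_n(X^k)\le 0$ for all $k$, then $\mathrm{MAXVAR}_n(X)\le0$; (A5) $\mathrm{MAXVAR}_n(\lambda X)=\lambda\,\mathrm{MAXVAR}_n(X)$ for all $\lambda>0$, $X\in\mathbb{L}^2$; (A6) $\mathrm{MAXVAR}_n(X)>\mathbb{E}(X)$ for every non-constant $X\in\mathbb{L}^2$.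
   Context: For $X\in\mathbb{L}^2$, $\mathrm{MAXVAR}_n(X)=\mathbb{E}(\max\{X_1,\dots,X_n\})$, where $X_1,\dots,X_n$ are independent random variables each with the same distribution as $X$ (the value depends only on the distribution of $X$). ''Non-constant'' means not almost surely equal to a constant. *)

(* Defs.v *)
From HB Require Import structures.
From mathcomp Require Import all_boot all_order all_algebra.
From mathcomp Require Import all_classical all_reals all_analysis.
Set Implicit Arguments. Unset Strict Implicit. Unset Printing Implicit Defensive.
Import Order.TTheory GRing.Theory Num.Theory.
Local Open Scope ring_scope.
Local Open Scope ereal_scope.

Definition L2 d (T : measurableType d) (R : realType)
  (P : probability T R) (X : T -> R) : Prop :=
  measurable_fun setT X /\ 'N[P]_2%:E [EFin \o X] < +oo.

(* maxvar_aux P X k m = E[max(m, X_1, ..., X_k)] for X_1..X_k i.i.d. copies of X,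
   computed as an iterated integral over k independent copies of Omega. *)
Fixpoint maxvar_aux d (T : measurableType d) (R : realType)
  (P : probability T R) (X : T -> R) (k : nat) (m : R) : \bar R :=
  match k with
  | O => m%:E
  | k'.+1 => \int[P]_w maxvar_aux P X k' (Num.max m (X w))
  end.

(* MAXVAR_n(X) = E[max(X_1, ..., X_n)] with X_1..X_n i.i.d. copies of X,
   i.e. the integral of max(x_1,..,x_n) w.r.t. the n-fold product of P
   (written as an iterated integral over Omega^n). *)
Definition MAXVAR d (T : measurableType d) (R : realType)
  (P : probability T R) (n : nat) (X : T -> R) : \bar R :=
  \int[P]_w maxvar_aux P X n.-1 (X w).

(* Main.v *)
Require Import Defs.
From HB Require Import structures.
From mathcomp Require Import all_boot all_order all_algebra.
From mathcomp Require Import all_classical all_reals all_analysis.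
From mathcomp Require Import ring lra.
Import Order.TTheory GRing.Theory Num.Theory.
Local Open Scope classical_set_scope.
Local Open Scope ring_scope.
Local Open Scope ereal_scope.

Set Implicit Arguments. Unset Strict Implicit.
Section realfacts.
Context (R : realType).
Implicit Types a b x y m : R.

Lemma maxr_mono a b x : (a <= b)%R -> (Num.max a x <= Num.max b x)%R.
Proof. by move=> ab; case: (leP a x); case: (leP b x) => *; lra. Qed.

Lemma maxr_lip a b x : (a <= b)%R -> (Num.max b x <= Num.max a x + (b - a))%R.
Proof. by move=> ab; case: (leP a x); case: (leP b x) => *; lra. Qed.

Lemma maxr_dist m x y : (`|Num.max m x - Num.max m y| <= `|x - y|)%R.
Proof.
have h1 := ler_norm (x - y); have h2 := ler_norm (y - x).
rewrite distrC in h2.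
rewrite ler_norml; case: (leP m x); case: (leP m y) => *; apply/andP; split; lra.
Qed.
Lemma lemaxl x y : (x <= Num.max x y)%R.
Proof. by case: (leP x y) => *; lra. Qed.
Lemma lemaxr x y : (y <= Num.max x y)%R.
Proof. by case: (leP x y) => *; lra. Qed.
End realfacts.
Unset Implicit Arguments.

Section core.
Context d (T : measurableType d) (R : realType) (P : probability T R).
Local Open Scope ring_scope.
Local Notation Ri f := (Rintegral P setT f).
Local Notation integ f := (P.-integrable setT (EFin \o f)).

Definition okG (g : R -> R) :=
  [/\ {homo g : a b / (a <= b)%R},
      (forall a b, a <= b -> g b <= g a + (b - a))%R &
      (forall m, m <= g m)%R].

Lemma okG_lip g : okG g -> forall a b, (g a <= g b + `|a - b|)%R.
Proof.
move=> [mo li _] a b; case: (leP a b) => ab.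
  have := mo _ _ ab; have := normr_ge0 (a - b); lra.
have := li _ _ (ltW ab); have := ler_norm (a - b); lra.
Qed.

Lemma intE f : integ f -> (\int[P]_w (f w)%:E = (Ri f)%:E)%E.
Proof. by move=> i; rewrite /Rintegral fineK// integrable_fin_num. Qed.

Lemma int_cst c : integ (fun _ : T => c).
Proof. exact: finite_measure_integrable_cst. Qed.

Lemma Ri_cst c : Ri (fun _ : T => c) = c.
Proof.
rewrite Rintegral_cst// (_ : fine _ = 1) ?mulr1//.
exact: (congr1 fine (probability_setT P)).
Qed.

Lemma int_bound (f psi : T -> R) : measurable_fun setT f -> integ psi ->
  (forall w, `|f w| <= psi w)%R -> integ f.
Proof.
move=> mf ip b; apply: (le_integrable measurableT _ _ ip) => //.
  exact/measurable_realfun.measurable_EFinP.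
move=> w _ /=; rewrite lee_fin (le_trans (b w))//.
exact: ler_norm.
Qed.

Lemma int_abs f : integ f -> integ (fun w => `|f w|)%R.
Proof.
move=> i; have := integrable_abse i.
by apply: eq_integrable => // w _ /=.
Qed.

Lemma int_D f g : integ f -> integ g -> integ (fun w => f w + g w)%R.
Proof.
move=> i j; have := integrableD measurableT i j.
by apply: eq_integrable => // w _ /=; rewrite EFinD.
Qed.

Lemma int_Z c f : integ f -> integ (fun w => c * f w)%R.
Proof.
move=> i; have := integrableZl measurableT c i.
by apply: eq_integrable => // w _ /=; rewrite EFinM.
Qed.

Lemma int_meas f : integ f -> measurable_fun setT f.
Proof. by move=> /integrableP[/measurable_realfun.measurable_EFinP]. Qed.

Lemma int_max m f : integ f -> integ (fun w => Num.max m (f w)).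
Proof.
move=> i; apply: (@int_bound _ (fun w => `|m| + `|f w|)%R).
- apply: measurable_realfun.measurable_maxr => //; exact: int_meas.
- by apply: int_D; [exact: int_cst | exact: int_abs].
- move=> w; rewrite ler_norml; have := ler_norm m; have := ler_norm (f w).
  have := ler_norm (- m); have := ler_norm (- f w); rewrite !normrN.
  by case: (leP m (f w)) => *; apply/andP; split; lra.
Qed.

Lemma int_comp g f : okG g -> integ f -> integ (g \o f).
Proof.
move=> [mo li ge] i; apply: (@int_bound _ (fun w => `|g 0| + `|f w|)%R).
- apply: measurableT_comp; last exact: int_meas.
  exact: measurable_realfun.nondecreasing_measurable.
- by apply: int_D; [exact: int_cst | exact: int_abs].
- move=> w /=; rewrite ler_norml.
  have h1 := li _ _ (@lemaxl _ 0 (f w)).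
  have h2 := mo _ _ (@lemaxr _ 0 (f w)).
  have h3 := ge (f w).
  have := ler_norm (g 0); have := ler_norm (- g 0); have := ler_norm (f w).
  have := ler_norm (- f w); rewrite !normrN.
  by move: h1 h2; case: (leP 0 (f w)) => *; apply/andP; split; lra.
Qed.


Lemma okG_id : okG id.
Proof. by split => // a b ab; lra. Qed.

Lemma G_step (X : T -> R) g : integ X -> okG g ->
  okG (fun m => Ri (fun w => g (Num.max m (X w)))).
Proof.
move=> iX gok; have [mo li ge] := gok.
have ic m : integ (fun w => g (Num.max m (X w))).
  exact: (int_comp _ _ gok (int_max m _ iX)).
split.
- move=> a b ab; apply: le_Rintegral => // w _.
  by apply: mo; exact: maxr_mono.
- move=> a b ab.
  rewrite -[X in _ + X]Ri_cst -RintegralD //; last exact: int_cst.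
  apply: le_Rintegral => //; first by apply: int_D => //; exact: int_cst.
  move=> w _; have := li _ _ (maxr_mono (X w) ab).
  have := maxr_lip (X w) ab; have := mo _ _ (maxr_lip (X w) ab).
  by lra.
- move=> m; rewrite -[X in X <= _]Ri_cst; apply: le_Rintegral => //.
    exact: int_cst.
  move=> w _; exact: le_trans (lemaxl _ _) (ge _).
Qed.

Lemma G_ok (X : T -> R) k : integ X ->
  exists g, okG g /\ forall m, maxvar_aux P X k m = (g m)%:E.
Proof.
move=> iX; elim: k => [|k [g [gok Hg]]]; first by exists id; split => //; exact: okG_id.
exists (fun m => Ri (fun w => g (Num.max m (X w)))); split; first exact: G_step.
move=> m /=; under eq_integral => w _ do rewrite Hg.
exact: (intE _ (int_comp _ _ gok (int_max m _ iX))).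
Qed.

End core.
Arguments okG {R}.
Arguments okG_lip {R g}.
Arguments G_ok {d T R} P {X} k.
Arguments int_comp {d T R P g f}.
Arguments intE {d T R P f}.
Arguments int_max {d T R P} m {f}.
Arguments int_D {d T R P f g}.
Arguments int_Z {d T R P} c {f}.
Arguments int_abs {d T R P f}.
Arguments int_cst {d T R} P c.
Arguments Ri_cst {d T R} P c.
Arguments int_meas {d T R P f}.
Arguments int_bound {d T R P f} psi.

Set Implicit Arguments. Unset Strict Implicit.
Section realfacts2.
Context (R : realType).
Local Open Scope ring_scope.
Implicit Types a b x y m l : R.

Lemma maxr_pM l m x : 0 < l -> Num.max (l * m) (l * x) = l * Num.max m x.
Proof.
move=> l0; case: (leP m x) => h.
  by rewrite max_r // ler_pM2l.
by rewrite max_l // ler_pM2l // ltW.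
Qed.

Lemma maxr_conv l a b x y : 0 <= l <= 1 ->
  Num.max (l * a + (1 - l) * b) (l * x + (1 - l) * y) <=
  l * Num.max a x + (1 - l) * Num.max b y.
Proof.
move=> /andP[l0 l1]; have l1' : 0 <= 1 - l by lra.
have h1 := ler_wpM2l l0 (lemaxl a x); have h2 := ler_wpM2l l0 (lemaxr a x).
have h3 := ler_wpM2l l1' (lemaxl b y); have h4 := ler_wpM2l l1' (lemaxr b y).
by case: (leP (l * a + (1 - l) * b) (l * x + (1 - l) * y)) => *; lra.
Qed.

Lemma max_ge_both m c z : m <= z -> c <= z -> Num.max m c <= z.
Proof. by case: (leP m c). Qed.
End realfacts2.
Unset Implicit Arguments.

Section main.
Context d (T : measurableType d) (R : realType) (P : probability T R).
Local Open Scope ring_scope.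
Local Notation Ri f := (Rintegral P setT f).
Local Notation integ f := (P.-integrable setT (EFin \o f)).

Definition gfun (X : T -> R) k m := fine (maxvar_aux P X k m).

Lemma gfun_ok X k : integ X ->
  okG (gfun X k) /\ forall m, maxvar_aux P X k m = (gfun X k m)%:E.
Proof.
move=> iX; have [g [gok Hg]] := G_ok P k iX.
have -> : gfun X k = g by apply/funext => m; rewrite /gfun Hg.
by split => // m; rewrite Hg.
Qed.

Lemma gfun_okG X k : integ X -> okG (gfun X k).
Proof. by move=> iX; case: (gfun_ok X k iX). Qed.

Lemma gfun_int X k f : integ X -> integ f -> integ (fun w => gfun X k (f w)).
Proof. move=> iX iF; exact: (int_comp (gfun_okG X k iX) iF). Qed.

Lemma gfunS X k m : integ X ->
  gfun X k.+1 m = Ri (fun w => gfun X k (Num.max m (X w))).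
Proof.
move=> iX; rewrite /gfun /=.
under eq_integral => w _ do rewrite (gfun_ok X k iX).2.
by rewrite (intE (gfun_int X k _ iX (int_max m iX))).
Qed.

Lemma MAXVAR_E X n : integ X -> MAXVAR P n X = (Ri (fun w => gfun X n.-1 (X w)))%:E.
Proof.
move=> iX; rewrite /MAXVAR.
under eq_integral => w _ do rewrite (gfun_ok X n.-1 iX).2.
by rewrite (intE (gfun_int X n.-1 _ iX iX)).
Qed.


Lemma aux_cst (C : R) k : maxvar_aux P (fun _ => C) k C = C%:E.
Proof.
elim: k => [//|k IH] /=.
under eq_integral => w _ do rewrite maxxx IH.
rewrite integral_cst //.
by rewrite (_ : _ [set: T] = 1%E) ?mule1 //; exact: (probability_setT P).
Qed.

Lemma A1 n (C : R) : MAXVAR P n (fun _ => C) = C%:E.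
Proof.
rewrite /MAXVAR; under eq_integral => w _ do rewrite aux_cst.
rewrite integral_cst //.
by rewrite (_ : _ [set: T] = 1%E) ?mule1 //; exact: (probability_setT P).
Qed.

Lemma gfun_scale X l k m : integ X -> 0 < l ->
  gfun (fun w => l * X w) k (l * m) = l * gfun X k m.
Proof.
move=> iX l0; elim: k m => [//|k IH] m.
have iZ := int_Z l iX.
rewrite (gfunS _ _ _ iZ) (gfunS _ _ _ iX).
rewrite (@eq_Rintegral _ _ _ _ _ (fun w => l * gfun X k (Num.max m (X w)))); last first.
  by move=> w _; rewrite maxr_pM // IH.
by rewrite RintegralZl //; apply: gfun_int => //; exact: int_max.
Qed.

Lemma A5 n X l : integ X -> 0 < l ->
  MAXVAR P n (fun w => l * X w) = (l%:E * MAXVAR P n X)%E.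
Proof.
move=> iX l0; have iZ := int_Z l iX.
rewrite (MAXVAR_E _ n iZ) (MAXVAR_E _ n iX) -EFinM.
rewrite (@eq_Rintegral _ _ _ _ _ (fun w => l * gfun X n.-1 (X w))); last first.
  by move=> w _; rewrite gfun_scale.
by rewrite RintegralZl //; apply: gfun_int.
Qed.


Lemma int_B f g : integ f -> integ g -> integ (fun w => f w - g w).
Proof.
move=> i j; have := int_D i (int_Z (-1) j).
by apply: eq_integrable => // w _ /=; rewrite mulN1r.
Qed.

Lemma gfun_conv X Y l k a b : integ X -> integ Y -> 0 <= l <= 1 ->
  gfun (fun w => l * X w + (1 - l) * Y w) k (l * a + (1 - l) * b)
  <= l * gfun X k a + (1 - l) * gfun Y k b.
Proof.
move=> iX iY hl; elim: k a b => [|k IH] a b; first by rewrite /gfun /=.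
set Z := (fun w => l * X w + (1 - l) * Y w).
have iZ : integ Z by apply: int_D; apply: int_Z.
have [moZ _ _] := gfun_okG Z k iZ.
have iphi : integ (fun w => l * Num.max a (X w) + (1 - l) * Num.max b (Y w)).
  by apply: int_D; apply: int_Z; apply: int_max.
have i1 : integ (fun w => gfun Z k (Num.max (l * a + (1 - l) * b) (Z w))).
  by apply: gfun_int => //; apply: int_max.
have i2 : integ (fun w => gfun Z k
   (l * Num.max a (X w) + (1 - l) * Num.max b (Y w))) by exact: gfun_int.
have i3 : integ (fun w => gfun X k (Num.max a (X w))).
  by apply: gfun_int => //; apply: int_max.
have i4 : integ (fun w => gfun Y k (Num.max b (Y w))).
  by apply: gfun_int => //; apply: int_max.
have i5 : integ (fun w => l * gfun X k (Num.max a (X w))) by exact: int_Z.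
have i6 : integ (fun w => (1 - l) * gfun Y k (Num.max b (Y w))) by exact: int_Z.
have i7 : integ (fun w => l * gfun X k (Num.max a (X w)) +
   (1 - l) * gfun Y k (Num.max b (Y w))) by exact: int_D.
rewrite (gfunS _ _ _ iZ) (gfunS _ _ _ iX) (gfunS _ _ _ iY).
apply: (@le_trans _ _ (Ri (fun w => gfun Z k
   (l * Num.max a (X w) + (1 - l) * Num.max b (Y w))))).
  by apply: le_Rintegral => // w _; apply: moZ; exact: maxr_conv.
apply: (@le_trans _ _ (Ri (fun w => l * gfun X k (Num.max a (X w)) +
   (1 - l) * gfun Y k (Num.max b (Y w))))).
  by apply: le_Rintegral => // w _; exact: IH.
by rewrite RintegralD // !RintegralZl.
Qed.

Lemma A2 n X Y l : integ X -> integ Y -> 0 <= l <= 1 ->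
  (MAXVAR P n (fun w => l * X w + (1 - l) * Y w)%R
   <= l%:E * MAXVAR P n X + (1 - l)%R%:E * MAXVAR P n Y)%E.
Proof.
move=> iX iY hl.
have iZ : integ (fun w => l * X w + (1 - l) * Y w) by apply: int_D; apply: int_Z.
rewrite (MAXVAR_E _ n iZ) (MAXVAR_E _ n iX) (MAXVAR_E _ n iY) -!EFinM -EFinD lee_fin.
rewrite -!RintegralZl //; try exact: gfun_int.
rewrite -RintegralD //; try by apply: int_Z; exact: gfun_int.
apply: le_Rintegral => //; first exact: gfun_int.
  by apply: int_D; apply: int_Z; exact: gfun_int.
by move=> w _; exact: gfun_conv.
Qed.

Lemma gfun_lip X Y k m : integ X -> integ Y ->
  gfun X k m <= gfun Y k m + k%:R * Ri (fun w => `|X w - Y w|).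
Proof.
move=> iX iY; elim: k m => [|k IH] m; first by rewrite /gfun /= mul0r addr0.
set E := Ri (fun w => `|X w - Y w|).
have iE : integ (fun w => `|X w - Y w|) by apply: int_abs; exact: int_B.
rewrite (gfunS _ _ _ iX) (gfunS _ _ _ iY).
apply: (@le_trans _ _ (Ri (fun w => gfun Y k (Num.max m (Y w)) + `|X w - Y w| + k%:R * E))).
  apply: le_Rintegral => //.
  - by apply: gfun_int => //; apply: int_max.
  - by apply: int_D; [apply: int_D => //; apply: gfun_int => //; apply: int_max | exact: int_cst].
  - move=> w _; apply: le_trans (IH _) _; rewrite lerD2r.
    apply: le_trans (okG_lip (gfun_okG Y k iY) _ (Num.max m (Y w))) _.
    by rewrite lerD2l maxr_dist.
rewrite RintegralD //; last exact: int_cst.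
  rewrite RintegralD //; last by apply: gfun_int => //; apply: int_max.
  by rewrite Ri_cst -/E mulrSr; lra.
by apply: int_D => //; apply: gfun_int => //; apply: int_max.
Qed.

Lemma MAXVAR_lip n X Y : (1 <= n)%N -> integ X -> integ Y ->
  (MAXVAR P n X <= MAXVAR P n Y + (n%:R * Ri (fun w => `|X w - Y w|))%:E)%E.
Proof.
move=> n1 iX iY.
set E := Ri (fun w => `|X w - Y w|).
have iE : integ (fun w => `|X w - Y w|) by apply: int_abs; exact: int_B.
rewrite (MAXVAR_E _ n iX) (MAXVAR_E _ n iY) -EFinD lee_fin.
have i1 : integ (fun w => gfun X n.-1 (X w)) by exact: gfun_int.
have i2 : integ (fun w => gfun Y n.-1 (Y w)) by exact: gfun_int.
have i3 : integ (fun w => gfun Y n.-1 (Y w) + `|X w - Y w|) by exact: int_D.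
have i4 : integ (fun w => gfun Y n.-1 (Y w) + `|X w - Y w| + n.-1%:R * E).
  by apply: int_D => //; exact: int_cst.
apply: (@le_trans _ _ (Ri (fun w => gfun Y n.-1 (Y w) + `|X w - Y w| + n.-1%:R * E))).
  apply: le_Rintegral => // w _.
  apply: le_trans (gfun_lip _ _ _ _ iX iY) _; rewrite lerD2r.
  exact: le_trans (okG_lip (gfun_okG Y n.-1 iY) _ (Y w)) _.
rewrite RintegralD //; last exact: int_cst.
rewrite RintegralD // Ri_cst -/E.
have -> : (n%:R = n.-1%:R + 1 :> R) by rewrite natr1 prednK.
by lra.
Qed.


Lemma gfun_ge_max X k m : integ X -> Num.max m (Ri X) <= gfun X k.+1 m.
Proof.
move=> iX; rewrite (gfunS _ _ _ iX).
have [_ _ ge] := gfun_okG X k iX.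
have i1 : integ (fun w => Num.max m (X w)) by exact: int_max.
have i2 : integ (fun w => gfun X k (Num.max m (X w))) by exact: gfun_int.
apply: (@le_trans _ _ (Ri (fun w => Num.max m (X w)))); last first.
  by apply: le_Rintegral => // w _; exact: ge.
apply: max_ge_both.
  rewrite -[X in X <= _](Ri_cst P m); apply: le_Rintegral => //.
    exact: int_cst.
  by move=> w _; exact: lemaxl.
by apply: le_Rintegral => // w _; exact: lemaxr.
Qed.

Lemma A6 n X : (2 <= n)%N -> integ X ->
  ~ (exists c : R, {ae P, forall w, X w = c}) ->
  (\int[P]_w (X w)%:E < MAXVAR P n X)%E.
Proof.
move=> hn iX hc; rewrite (intE iX) (MAXVAR_E _ n iX) lte_fin.
case: n hn => [|[|k]] // _ /=.
set c := Ri X.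
have i1 : integ (fun w => Num.max c (X w)) by exact: int_max.
have i2 : integ (fun w => gfun X k.+1 (X w)) by exact: gfun_int.
apply: (@lt_le_trans _ _ (Ri (fun w => Num.max c (X w)))); last first.
  apply: le_Rintegral => // w _.
  apply: le_trans (gfun_ge_max _ k _ iX).
  by rewrite -/c maxC.
rewrite ltNge; apply/negP => hle.
have i3 : integ (fun w => Num.max c (X w) - X w) by exact: int_B.
have D0 : Ri (fun w => Num.max c (X w) - X w) = 0.
  rewrite RintegralB // -/c.
  have : c <= Ri (fun w => Num.max c (X w)).
    by apply: le_Rintegral => // w _; exact: lemaxr.
  by lra.
have i4 : integ (fun w => X w - c) by apply: int_B => //; exact: int_cst.
have i5 : integ (fun w => 2 * (Num.max c (X w) - X w)) by exact: int_Z.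
have A0 : Ri (fun w => `|X w - c|) = 0.
  rewrite (@eq_Rintegral _ _ _ _ _ (fun w => 2 * (Num.max c (X w) - X w) + (X w - c))).
    rewrite RintegralD // RintegralZl // D0 RintegralB //; last exact: int_cst.
    by rewrite Ri_cst -/c; lra.
  move=> w _ /=; case: (leP c (X w)) => h.
    by rewrite ger0_norm ?subr_ge0 //; lra.
  by rewrite ltr0_norm ?subr_lt0 //; lra.
apply: hc; exists c.
have iA : integ (fun w => `|X w - c|) by exact: int_abs.
have : (\int[P]_(w in setT) `|(EFin \o (fun w => (X w - c)%R)) w| = 0)%E.
  by rewrite -[RHS]/(0%R%:E) -A0 -(intE iA).
have mi4 := i4; move/integrableP: mi4 => [mi4 _].
move/(ae_eq_integral_abs P measurableT mi4).
apply: filterS => w /(_ I) /= /eqP; rewrite eqe subr_eq0 => /eqP.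
done.
Qed.

End main.

Section l2.
Context d (T : measurableType d) (R : realType) (P : probability T R).
Local Open Scope ring_scope.

Lemma L2_int X : L2 P X -> P.-integrable setT (EFin \o X).
Proof.
move=> [mX nX]; apply/Lfun1_integrable; apply: (Lfun_subset12 (mu := P)).
  by rewrite (_ : _ [set: T] = 1%E) //; exact: (probability_setT P).
rewrite inE; apply/andP; split; rewrite inE //=.
Qed.

Lemma L1_le_L2 (Z : T -> R) : measurable_fun setT Z ->
  ((\int[P]_w `|Z w|%:E) <= 'N[P]_2%:E [EFin \o Z])%E.
Proof.
move=> mZ.
have := @hoelder _ _ _ P Z (cst 1%R) 2 2 mZ (measurable_cst _) (ltr0Sn _ 1) (ltr0Sn _ 1).
have h2 : (2^-1 + 2^-1 = 1 :> R) by field.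
move=> /(_ h2).
rewrite Lnorm1.
have -> : 'N[P]_2%:E[EFin \o cst 1%R] = 1%E.
  rewrite (_ : EFin \o cst 1%R = cst 1%E) //.
  by rewrite Lnorm_cst1 (_ : _ [set: T] = 1%E) ?poweR1r //; exact: (probability_setT P).
rewrite mule1; apply: le_trans; rewrite le_eqVlt; apply/orP; left; apply/eqP.
by apply: eq_integral => w _ /=; rewrite mulr1.
Qed.
End l2.

Theorem theorem2 (d : measure_display) (T : measurableType d) (R : realType)
  (P : probability T R) (n : nat) (hn : (2 <= n)%N) :
  (* (A1) *)
  (forall C : R, MAXVAR P n (fun _ => C) = C%:E) /\
  (* (A2) *)
  (forall (X Y : T -> R) (l : R), L2 P X -> L2 P Y -> (0 <= l <= 1)%R ->
     MAXVAR P n (fun w => l * X w + (1 - l) * Y w)%R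
       <= l%:E * MAXVAR P n X + (1 - l)%R%:E * MAXVAR P n Y) /\
  (* (A4) *)
  (forall (Xk : nat -> T -> R) (X : T -> R),
     (forall k, L2 P (Xk k)) -> L2 P X ->
     (fun k => 'N[P]_2%:E [EFin \o (fun w => Xk k w - X w)%R]) @ \oo --> 0 ->
     (forall k, MAXVAR P n (Xk k) <= 0) ->
     MAXVAR P n X <= 0) /\
  (* (A5) *)
  (forall (X : T -> R) (l : R), L2 P X -> (0 < l)%R ->
     MAXVAR P n (fun w => l * X w)%R = l%:E * MAXVAR P n X) /\
  (* (A6) *)
  (forall X : T -> R, L2 P X ->
     ~ (exists c : R, {ae P, forall w, X w = c}) ->
     \int[P]_w (X w)%:E < MAXVAR P n X).
Proof.
split; first by move=> C; exact: A1.
split.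
  by move=> X Y l hX hY hl; apply: A2 => //; apply: L2_int.
split.
  move=> Xk X hXk hX hcv hle.
  have iX : P.-integrable setT (EFin \o X) by apply: L2_int.
  have n1 : (1 <= n)%N by exact: ltnW.
  have bnd k : MAXVAR P n X <= n%:R%:E *
      'N[P]_2%:E [EFin \o (fun w => Xk k w - X w)%R].
    have iY : P.-integrable setT (EFin \o Xk k) by apply: L2_int.
    have h := @MAXVAR_lip _ _ _ P n _ _ n1 iX iY.
    apply: le_trans h _.
    apply: le_trans (leeD (hle k) (lexx _)) _; rewrite add0e EFinM.
    apply: lee_wpmul2l; first by rewrite lee_fin.
    have iA : P.-integrable setT (EFin \o (fun w => `|Xk k w - X w|)%R).
      by apply: int_abs; exact: int_B.
    rewrite (_ : Rintegral _ _ _ = Rintegral P setT (fun w => `|Xk k w - X w|)%R).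
      rewrite -(intE iA); apply: L1_le_L2.
      exact: (@int_meas _ _ _ P _ (int_B _ _ _ P _ _ iY iX)).
    by apply: eq_Rintegral => w _; rewrite distrC.
  have cv : (fun k => n%:R%:E * 'N[P]_2%:E [EFin \o (fun w => Xk k w - X w)%R])
      @ \oo --> 0.
    by have := cvgeZl (y := n%:R%:E) (fin_numE _) hcv; rewrite mule0.
  rewrite -(cvg_lim (@ereal_hausdorff _) cv).
  apply: lime_ge; first exact: (cvgP _ cv).
  by apply: nearW => k; exact: bnd.
split.
  by move=> X l hX l0; apply: A5 => //; apply: L2_int.
by move=> X hX; apply: A6 => //; apply: L2_int.
Qed.
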